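(* Let $\mathbb{F}$ be a field and $n \ge 1$ an integer. For each integer $K \ge 1$, let $M_n(K)$ denote the set of monomial ideals $I$ of $\mathbb{F}[X_1,\ldots,X_n]$ such that the quotient space $\mathbb{F}[X_1,\ldots,X_n]/I$ has dimension exactly $K$ over $\mathbb{F}$. Then $|M_n(1)| = 1$, and for every $K \ge 2$, $$|M_n(K)| \le K^n (K+n-2)^{(n-1)(K-1)} (2K-3)^{K-2}.$$ In particular, for every real number $R > 1$ there exists a constant $c$, depending only on $n$ and $R$, such that $|M_n(K)| \le c\, R^{K^{3/2}}$ for all integers $K \ge 1$.
   Context: A monomial ideal of $\mathbb{F}[X_1,\ldots,X_n]$ is an ideal generated by monomials $X_1^{j_1}\cdots X_n^{j_n}$. *)

(* Defs.v *)
From Stdlib Require Import Reals.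
From mathcomp Require Import all_boot all_algebra.
From mathcomp Require Import mpoly.

Set Implicit Arguments.
Unset Strict Implicit.
Unset Printing Implicit Defensive.

Import GRing.Theory.
Local Open Scope ring_scope.

Definition is_ideal (n : nat) (F : fieldType) (I : {mpoly F[n]} -> Prop) : Prop :=
  [/\ I 0,
      (forall p q, I p -> I q -> I (p + q)) &
      (forall p q, I q -> I (p * q))].

Definition generated_by_monomials (n : nat) (F : fieldType)
    (S : 'X_{1..n} -> Prop) (I : {mpoly F[n]} -> Prop) : Prop :=
  forall p, I p <->
    exists s : seq ({mpoly F[n]} * 'X_{1..n}),
      (forall x, List.In x s -> S x.2) /\
      p = \sum_(x <- s) x.1 * 'X_[x.2].

Definition monomial_ideal (n : nat) (F : fieldType) (I : {mpoly F[n]} -> Prop) : Prop :=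
  exists S : 'X_{1..n} -> Prop, generated_by_monomials S I.

Definition quot_dim_eq (n : nat) (F : fieldType) (I : {mpoly F[n]} -> Prop)
    (K : nat) : Prop :=
  exists b : 'I_K -> {mpoly F[n]},
    (forall c : 'I_K -> F, I (\sum_i c i *: b i) -> forall i, c i = 0) /\
    (forall p, exists c : 'I_K -> F, I (p - \sum_i c i *: b i)).

Definition in_M (n : nat) (F : fieldType) (K : nat) (I : {mpoly F[n]} -> Prop) : Prop :=
  monomial_ideal I /\ quot_dim_eq I K.

Definition same_set (n : nat) (F : fieldType) (I J : {mpoly F[n]} -> Prop) : Prop :=
  forall p, I p <-> J p.

Definition distinct_in_M (n : nat) (F : fieldType) (K m : nat)
    (f : 'I_m -> ({mpoly F[n]} -> Prop)) : Prop :=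
  (forall i, in_M K (f i)) /\ (forall i j, i != j -> ~ same_set (f i) (f j)).

(* |M_n(K)| <= N : every family of pairwise distinct members has size <= N *)
Definition card_M_le (n : nat) (F : fieldType) (K N : nat) : Prop :=
  forall m (f : 'I_m -> ({mpoly F[n]} -> Prop)), distinct_in_M K f -> (m <= N)%N.

Definition card_M_eq1 (n : nat) (F : fieldType) (K : nat) : Prop :=
  exists I : {mpoly F[n]} -> Prop, in_M K I /\ forall J, in_M K J -> same_set J I.

Definition card_M_leR (n : nat) (F : fieldType) (K : nat) (x : R) : Prop :=
  forall m (f : 'I_m -> ({mpoly F[n]} -> Prop)), distinct_in_M K f -> Rle (INR m) x.

(* Main.v *)
Require Import Defs.
From Stdlib Require Import Reals Lra Lia Psatz Classical ClassicalEpsilon.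
From mathcomp Require Import all_boot all_algebra zify.
From mathcomp Require Import mpoly.

Set Implicit Arguments.
Unset Strict Implicit.
Unset Printing Implicit Defensive.
Import GRing.Theory.
Local Open Scope ring_scope.

Section Mono.
Variables (n : nat) (F : fieldType).

Definition good (S : 'X_{1..n} -> Prop) a := exists s, S s /\ (s <= a)%MM.

Lemma coefMX_0 (q : {mpoly F[n]}) m a : ~~ (m <= a)%MM -> (q * 'X_[m])@_a = 0.
Proof.
move=> h; apply/eqP; rewrite -[_ == 0]negbK -mcoeff_msupp; apply/negP.
rewrite (perm_mem (msuppMX q m)) => /mapP [m' _ e].
by rewrite e lem_addr in h.
Qed.

Lemma in_In (T : eqType) (x : T) s : x \in s -> List.In x s.
Proof. elim: s => //= y s IH; rewrite inE => /orP [/eqP ->|/IH]; auto. Qed.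

Lemma build S (l : seq 'X_{1..n}) (g : 'X_{1..n} -> F) :
  (forall a, a \in l -> good S a) ->
  exists s : seq ({mpoly F[n]} * 'X_{1..n}),
    (forall x, List.In x s -> S x.2) /\
    \sum_(a <- l) g a *: 'X_[a] = \sum_(x <- s) x.1 * 'X_[x.2].
Proof.
elim: l => [|a l IH] h.
  by exists [::]; split => //; rewrite !big_nil.
have [s [hs hsa]] : exists s, S s /\ (s <= a)%MM by apply: h; rewrite inE eqxx.
have [s' [hs' e]] := IH (fun b hb => h b (@mem_behead _ (a :: l) b hb)).
exists ((g a *: 'X_[(a - s)%MM], s) :: s'); split.
  by move=> x /= [<-|/hs'].
rewrite !big_cons e /= -scalerAl -mpolyXD submK //.
Qed.

Lemma gen_mem S (I : {mpoly F[n]} -> Prop) : generated_by_monomials S I ->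
  forall p, I p <-> (forall a, ~ good S a -> p@_a = 0).
Proof.
move=> hg p; rewrite hg; split.
  move=> [s [hs ->]] a ng.
  rewrite raddf_sum /=; apply: big1_seq => x /andP [_ /in_In hx].
  apply: coefMX_0; apply/negP => hle; apply: ng; exists x.2; split => //.
  exact: hs.
move=> h; rewrite (mpolyE p); apply: build => a ha.
apply: NNPP => ng; move: ha; rewrite mcoeff_msupp (h a ng) eqxx //.
Qed.

Definition mono (I : {mpoly F[n]} -> Prop) :=
  (forall p, I p <-> (forall a, ~ I 'X_[a] -> p@_a = 0)) /\
  (forall a b, (b <= a)%MM -> I 'X_[b] -> I 'X_[a]).

Lemma gen_mono S I : generated_by_monomials S I -> mono I.
Proof.
move=> hg.
have hX : forall a, I 'X_[a] <-> good S a.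
  move=> a; rewrite (gen_mem hg); split.
    move=> h; apply: NNPP => ng; move: (h a ng); rewrite mcoeffX eqxx.
    by move/eqP; rewrite oner_eq0.
  move=> ga b ngb; rewrite mcoeffX; case: eqP => [e|//].
  by subst b; case: (ngb ga).
split.
  move=> p; rewrite (gen_mem hg); split => h a na; apply: h => //.
    by move=> /hX.
  by move=> /hX.
move=> a b hba /hX [s [hs hsb]]; apply/hX; exists s; split => //.
apply/mnm_lepP => i; apply: leq_trans (mnm_lepP hsb i) (mnm_lepP hba i).
Qed.

Lemma indep_bound (I : {mpoly F[n]} -> Prop) K : mono I -> quot_dim_eq I K ->
  forall p (t : 'I_p -> 'X_{1..n}), injective t -> (forall j, ~ I 'X_[t j]) ->
  (p <= K)%N.
Proof.
move=> [hm _] [b [_ hspan]] p t ti ht.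
case: (leqP p K) => // hKp; exfalso.
have [c hc] := fin_all_exists (fun j : 'I_p => hspan 'X_[t j]).
pose C : 'M[F]_(p, K) := \matrix_(j, i) c j i.
have hr : (0 < \rank (kermx C))%N.
  rewrite mxrank_ker subn_gt0; exact: leq_ltn_trans (rank_leq_col C) hKp.
have [j0 [i0 hji]] : exists j0 i0, kermx C j0 i0 != 0.
  apply: NNPP => hno; move: hr; rewrite lt0n mxrank_eq0; case/negP.
  apply/eqP/matrixP => j i; rewrite [RHS]mxE; apply/eqP; apply: NNPP => hne.
  by apply: hno; exists j, i; apply/negP.
pose v (j : 'I_p) : F := kermx C j0 j.
have hv : forall i, \sum_j v j * c j i = 0.
  move=> i; have := congr1 (fun M : 'M[F]_(p, K) => M j0 i) (mulmx_ker C).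
  rewrite !mxE => e; rewrite -[RHS]e; apply: eq_bigr => j _; by rewrite [C _ _]mxE.
pose P := \sum_j v j *: ('X_[t j] : {mpoly F[n]}).
have hcoef : forall a, ~ I 'X_[a] -> P@_a = 0.
  move=> a na.
  have e : forall j, ('X_[t j] : {mpoly F[n]})@_a = \sum_i c j i * (b i)@_a.
    move=> j; have := (proj1 (hm _) (hc j) a na).
    rewrite mcoeffB raddf_sum /= => /eqP; rewrite subr_eq0 => /eqP ->.
    by apply: eq_bigr => i _; rewrite mcoeffZ.
  rewrite raddf_sum /=.
  under eq_bigr => j _ do rewrite mcoeffZ e mulr_sumr.
  rewrite exchange_big /=; apply: big1 => i _.
  under eq_bigr => j _ do rewrite mulrA.
  by rewrite -mulr_suml hv mul0r.
have hP : I P by apply/hm.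
have := proj1 (hm P) hP (t i0) (ht i0).
rewrite raddf_sum /= (bigD1 i0) //= big1 ?addr0.
  by rewrite mcoeffZ mcoeffX eqxx mulr1 => /eqP; rewrite (negbTE hji).
move=> j hj; rewrite mcoeffZ mcoeffX; case: eqP => [/ti e|]; last by rewrite mulr0.
by rewrite e eqxx in hj.
Qed.

End Mono.
Local Close Scope ring_scope.

Lemma card_bigcup_le (I T : finType) (P : pred I) (F : I -> {set T}) :
  #|\bigcup_(i | P i) F i| <= \sum_(i | P i) #|F i|.
Proof.
elim/big_rec2: _ => [|i s U _ IH]; first by rewrite cards0.
 apply: leq_trans (leq_card_setU _ _) _; by rewrite leq_add2l.
Qed.

Section Box.
Variables (n B : nat).
Definition Mon := {ffun 'I_n -> 'I_B.+1}.
Definition mle (x y : Mon) := [forall i, x i <= y i].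
Definition down (D : {set Mon}) := [forall x in D, forall y, mle y x ==> (y \in D)].
Definition downs k := [set D : {set Mon} | down D && (#|D| == k)].
Definition wt (x : Mon) := \sum_i (x i : nat).
Definition zero : Mon := [ffun _ => ord0].
Definition inc (d : Mon) i : Mon := [ffun j => if j == i then inord (d j).+1 else d j].
Definition dec (d : Mon) i : Mon := [ffun j => if j == i then inord (d j).-1 else d j].

Lemma downP D : down D -> forall x y, x \in D -> mle y x -> y \in D.
Proof. move=> /forall_inP h x y xD le; exact: (implyP (forallP (h x xD) y) le). Qed.

Lemma mle_wt_eq x y : mle y x -> wt x <= wt y -> y = x.
Proof.
move=> /forallP le hw.
have e : wt x = wt y + \sum_i (x i - y i)%N.
  rewrite /wt -big_split /=; apply: eq_bigr => i _; by rewrite subnKC.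
have : \sum_i (x i - y i)%N == 0 by rewrite -(eqn_add2l (wt y)) addn0 -e eqn_leq hw /= e leq_addr.
rewrite sum_nat_eq0 => /forallP h0; apply/ffunP => i; apply/val_inj/eqP.
by rewrite eqn_leq le /= -subn_eq0 (implyP (h0 i)).
Qed.

Lemma zero_le x : mle zero x.
Proof. by apply/forallP => i; rewrite ffunE. Qed.

Lemma downs1 : #|downs 1| <= 1.
Proof.
have : downs 1 \subset [set [set zero]]; last by move/subset_leq_card; rewrite cards1.
apply/subsetP => D; rewrite !inE => /andP [dD /cards1P [x ex]].
have : zero \in D by apply: (downP dD (x := x)); rewrite ?ex ?inE // zero_le.
by rewrite ex inE => /eqP <-.
Qed.

Lemma downsS k : 0 < k -> #|downs k.+1| <= #|downs k| * (k * n).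
Proof.
move=> k0.
pose U := \bigcup_(D' in downs k) \bigcup_(d in D') \bigcup_(i : 'I_n)
           [set D' :|: [set inc d i]].
have sub : downs k.+1 \subset U.
  apply/subsetP => D; rewrite inE => /andP [dD /eqP cD].
  have [x0 x0D] : exists x0, x0 \in D.
    apply/set0Pn; rewrite -card_gt0 cD //.
  case: (@arg_maxnP _ x0 (mem D) wt x0D) => m mD mmax.
  have {}mD : m \in D := mD.
  have [i mi] : exists i, 0 < m i.
    apply: NNPP => hno.
    have wm : wt m = 0.
      apply/eqP; rewrite sum_nat_eq0; apply/forallP => i /=; rewrite ?implyTb.
      apply/eqP; apply: NNPP => h; apply: hno; exists i; rewrite lt0n; exact/eqP.
    have : D \subset [set zero].
      apply/subsetP => x xD; rewrite inE; apply/eqP/esym.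
      apply: mle_wt_eq; first exact: zero_le.
      have hx : wt x <= wt m := mmax x xD.
      by move: hx; rewrite wm leqn0 => /eqP ->.
    move/subset_leq_card; rewrite cards1 cD ltnS leqn0 => /eqP k00.
    by rewrite k00 in k0.
  pose D' := D :\ m.
  have D'k : #|D'| = k.
    by move: (cardsD1 m D); rewrite mD cD add1n => /eqP; rewrite eqSS => /eqP ->.
  have dD' : down D'.
    apply/forall_inP => x; rewrite !inE => /andP [xm xD]; apply/forallP => y.
    apply/implyP => le; rewrite !inE (downP dD xD le) andbT; apply/eqP => ym.
    subst y; have := mle_wt_eq le (mmax x xD) => e; by rewrite e eqxx in xm.
  have dle : mle (dec m i) m.
    apply/forallP => j; rewrite ffunE; case: eqP => [->|//].
    by rewrite inordK ?leq_pred // (leq_ltn_trans (leq_pred _) (ltn_ord _)).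
  have dne : dec m i != m.
    apply/negP => /eqP /ffunP /(_ i); rewrite ffunE eqxx => /(congr1 (@nat_of_ord _)).
    rewrite inordK ?(leq_ltn_trans (leq_pred _) (ltn_ord _)) //.
    by move=> h; move: mi; rewrite -ltn_predL h ltnn.
  have ddD' : dec m i \in D' by rewrite !inE dne (downP dD mD dle).
  have incd : inc (dec m i) i = m.
    apply/ffunP => j; rewrite !ffunE; case: eqP => [->|//].
    apply/val_inj => /=.
    rewrite (@inordK _ (m i).-1) ?(leq_ltn_trans (leq_pred _) (ltn_ord _)) // prednK //.
    by rewrite inordK.
  apply/bigcupP; exists D'; first by rewrite inE dD' D'k eqxx.
  apply/bigcupP; exists (dec m i) => //.
  apply/bigcupP; exists i => //.
  by rewrite inE incd setUC setD1K.
apply: leq_trans (subset_leq_card sub) _.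
apply: leq_trans (card_bigcup_le _ _) _.
rewrite -sum_nat_const; apply: leq_sum => D'; rewrite inE => /andP [_ /eqP cD'].
apply: leq_trans (card_bigcup_le _ _) _.
rewrite -cD' -sum_nat_const; apply: leq_sum => d _.
apply: leq_trans (card_bigcup_le _ _) _.
rewrite -[X in _ <= X]card_ord -sum1_card; apply: leq_sum => i _.
by rewrite cards1.
Qed.

Lemma downs_bound k : 0 < k -> #|downs k| <= (k.-1)`! * n ^ k.-1.
Proof.
elim: k => // k IH _; case: k IH => [_|k IH]; first by rewrite /= downs1.
apply: leq_trans (downsS _) _ => //=.
apply: leq_trans (leq_mul (IH isT) (leqnn (k.+1 * n))) _.
rewrite factS expnS; apply/eq_leq; set a := k`!; set b := n ^ k.
rewrite [k.+1 * a]mulnC -!mulnA; congr (_ * _); rewrite mulnCA; congr (_ * _); apply: mulnC.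
Qed.

Lemma alldowns K : 0 < n ->
  #|[set D : {set Mon} | down D && (0 < #|D| <= K)]| <= K`! * n ^ K.-1.
Proof.
move=> n0.
have sub : [set D : {set Mon} | down D && (0 < #|D| <= K)] \subset
           \bigcup_(k < K) downs k.+1.
  apply/subsetP => D; rewrite inE => /andP [dD /andP [c0 cK]].
  have hk : #|D|.-1 < K by rewrite prednK.
  apply/bigcupP; exists (Ordinal hk) => //=.
  by rewrite prednK // inE dD eqxx.
apply: leq_trans (subset_leq_card sub) _.
apply: leq_trans (card_bigcup_le _ _) _.
case: K {sub} => [|K]; first by rewrite big_ord0.
apply: leq_trans (_ : \sum_(k < K.+1) (K`! * n ^ K) <= _); last first.
  by rewrite sum_nat_const card_ord factS mulnA.
apply: leq_sum => k _; apply: leq_trans (downs_bound _) _ => //=.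
apply: leq_mul; first by apply: leq_fact; rewrite -ltnS.
by apply: leq_pexp2l => //; rewrite -ltnS.
Qed.

End Box.

Definition pb (P : Prop) : bool := if excluded_middle_informative P then true else false.
Lemma pbP (P : Prop) : reflect P (pb P).
Proof. by rewrite /pb; case: excluded_middle_informative => h; constructor. Qed.

Section Conn.
Variables (n B : nat) (F : fieldType).

Definition mon (x : Mon n B) : 'X_{1..n} := [multinom (x i : nat) | i < n].

Lemma mon_inj : injective mon.
Proof.
move=> x y /mnmP e; apply/ffunP => i; apply/val_inj; have := e i; by rewrite !mnmE.
Qed.

Lemma mon_le x y : mle y x -> (mon y <= mon x)%MM.
Proof. by move=> /forallP h; apply/mnm_lepP => i; rewrite !mnmE. Qed.

Lemma mon_zero : mon (zero n B) = 0%MM.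
Proof. by apply/mnmP => i; rewrite !mnmE ffunE. Qed.

Lemma one_notin (I : {mpoly F[n]} -> Prop) K : mono I -> quot_dim_eq I K -> 0 < K ->
  ~ I 'X_[0%MM].
Proof.
move=> [hm hd] [b [hind _]] K0 h1.
have hall : forall p, I p.
  move=> p; apply/hm => a na; exfalso; apply: na; apply: hd h1.
  by apply/mnm_lepP => i; rewrite mnm0E.
have := hind (fun _ => 1%R) (hall _) (Ordinal K0).
by move/eqP; rewrite oner_eq0.
Qed.

Lemma std_bound (I : {mpoly F[n]} -> Prop) K : mono I -> quot_dim_eq I K ->
  forall a, ~ I 'X_[a] -> forall i, a i < K.
Proof.
move=> hmo hq a na i.
pose t (l : 'I_(a i).+1) : 'X_{1..n} := [multinom (if j == i then (l : nat) else 0%N) | j < n].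
apply: (indep_bound hmo hq (t := t)).
  move=> l1 l2 /mnmP /(_ i); rewrite !mnmE eqxx; exact: val_inj.
move=> l hl; apply: na; apply: (proj2 hmo) hl.
apply/mnm_lepP => j; rewrite mnmE; case: eqP => [->|//].
by rewrite -ltnS.
Qed.

Definition Dset (I : {mpoly F[n]} -> Prop) : {set Mon n B} :=
  [set x | ~~ pb (I 'X_[mon x])].

Lemma Dset_good I : mono I -> quot_dim_eq I B.+1 ->
  Dset I \in [set D | down D && (0 < #|D| <= B.+1)].
Proof.
move=> hmo hq; rewrite inE; apply/andP; split.
  apply/forall_inP => x; rewrite inE => hx; apply/forallP => y; apply/implyP => le.
  rewrite inE; apply/negP => /pbP hy; move: hx => /negP; apply; apply/pbP.
  exact: (proj2 hmo) (mon_le le) hy.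
apply/andP; split.
  rewrite card_gt0; apply/set0Pn; exists (zero n B); rewrite inE mon_zero.
  by apply/negP => /pbP; apply: one_notin hmo hq _.
apply: (indep_bound hmo hq (t := fun j : 'I_#|Dset I| => mon (enum_val j))).
  by move=> j1 j2 /mon_inj /enum_val_inj.
move=> j; have := enum_valP j; rewrite inE => /negP h hI; apply: h; exact/pbP.
Qed.

Lemma Dset_inj I J : mono I -> quot_dim_eq I B.+1 -> mono J -> quot_dim_eq J B.+1 ->
  Dset I = Dset J -> same_set I J.
Proof.
move=> hmI hqI hmJ hqJ e.
have hX : forall a, I 'X_[a] <-> J 'X_[a].
  move=> a; case: (boolP [forall i, a i < B.+1]) => [/forallP hb | /forallPn [i hi]].
    pose x : Mon n B := [ffun i => Ordinal (hb i)].
    have mx : mon x = a by apply/mnmP => i; rewrite !mnmE ffunE.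
    have := congr1 (fun D : {set Mon n B} => x \in D) e; rewrite /= !inE mx.
    by case: pbP => hI; case: pbP => hJ.
  split => _; apply: NNPP => nI.
    by move: hi; rewrite (std_bound hmJ hqJ nI).
  by move: hi; rewrite (std_bound hmI hqI nI).
move=> p; rewrite (proj1 hmI p) (proj1 hmJ p); split => h a na; apply: h => ?;
  apply: na; by apply/hX.
Qed.

End Conn.

Lemma core (F : fieldType) n K m (f : 'I_m -> ({mpoly F[n]} -> Prop)) :
  0 < n -> 0 < K -> distinct_in_M K f -> m <= K`! * n ^ K.-1.
Proof.
case: K => // B n0 _ [hin hdist].
have hmq : forall j, mono (f j) /\ quot_dim_eq (f j) B.+1.
  by move=> j; have [[S hS] hq] := hin j; split => //; exact: gen_mono hS.
pose phi j := Dset B (f j).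
have phiinj : injective phi.
  move=> j1 j2 e; case: (eqVneq j1 j2) => // ne; exfalso; apply: (hdist _ _ ne).
  have [m1 q1] := hmq j1; have [m2 q2] := hmq j2; exact: Dset_inj m1 q1 m2 q2 e.
have : phi @: setT \subset [set D | down D && (0 < #|D| <= B.+1)].
  apply/subsetP => D /imsetP [j _ ->]; have [m1 q1] := hmq j; exact: Dset_good m1 q1.
move/subset_leq_card; rewrite card_imset // cardsT card_ord => h.
exact: leq_trans h (alldowns _ _ n0).
Qed.

Section Reals3.
Local Open Scope R_scope.

Lemma Rpow_ge1 r y : 1 < r -> 0 < y -> 1 <= Rpower r y.
Proof.
intros hr hy. rewrite -{1}(@Rpower_O r); last lra.
left. apply Rpower_lt; lra.
Qed.

Lemma exp_cube z : 0 <= z -> (z/3)^3 <= exp z.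
Proof.
intros hz.
replace (exp z) with (exp (z/3) ^ 3).
- apply pow_incr. split. lra. pose proof (exp_ineq1_le (z/3)). lra.
- simpl. rewrite Rmult_1_r -!exp_plus. f_equal. field.
Qed.

Lemma real3 (n : nat) r : (0 < n)%N -> 1 < r ->
  exists c, forall K : nat, (1 <= K)%N ->
    (INR n * INR K) ^ K <= c * Rpower r (Rpower (INR K) (INR 3 / INR 2)).
Proof.
intros hn hr.
set (L := ln r).
assert (hL : 0 < L). { unfold L. rewrite -ln_1. apply ln_increasing; lra. }
assert (hnr : 1 <= INR n). { apply (le_INR 1). move/leP: hn. lia. }
destruct (INR_unbounded (27 * INR n / L^3)) as [N hN].
set (c := (INR n * INR (N*N)) ^ (N*N) + 1).
exists c. intros K hK.
assert (hK' : 1 <= INR K) by (apply (le_INR 1); lia).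
assert (hRp : 1 <= Rpower r (Rpower (INR K) (INR 3 / INR 2))).
{ apply Rpow_ge1; auto. unfold Rpower. apply exp_pos. }
assert (hc0 : 0 <= (INR n * INR (N*N)) ^ (N*N)).
{ apply pow_le. apply Rmult_le_pos; apply pos_INR. }
destruct (Nat.le_gt_cases K (N*N)) as [hle|hgt].
- apply Rle_trans with c; [|unfold c; nra].
  apply Rle_trans with ((INR n * INR (N*N)) ^ (N*N)); [|unfold c; lra].
  apply Rle_trans with ((INR n * INR (N*N)) ^ K).
  + apply pow_incr. split. apply Rmult_le_pos; apply pos_INR.
    apply Rmult_le_compat_l. apply pos_INR. apply le_INR; auto.
  + apply Rle_pow; auto.
    assert (1 <= INR (N*N)) by (apply (le_INR 1); lia). nra.
- apply Rle_trans with (Rpower r (Rpower (INR K) (INR 3 / INR 2))); [|unfold c; nra].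
  set (y := sqrt (INR K)).
  assert (hy0 : 0 < y) by (apply sqrt_lt_R0; lra).
  assert (hyy : y * y = INR K) by (apply sqrt_sqrt; lra).
  assert (hyN : INR N <= y).
  { unfold y. rewrite -(sqrt_square (INR N)); last apply pos_INR.
    apply sqrt_le_1_alt. rewrite -mult_INR. apply le_INR. lia. }
  assert (e1 : Rpower (INR K) (INR 3 / INR 2) = y * INR K).
  { replace (INR 3 / INR 2) with (/2 + 1) by (simpl; field).
    rewrite Rpower_plus (Rpower_1 (INR K)); last lra.
    rewrite (Rpower_sqrt (INR K)); last lra. reflexivity. }
  rewrite e1.
  assert (e2 : Rpower r (y * INR K) = (Rpower r y) ^ K).
  { rewrite -Rpower_mult Rpower_pow; auto. unfold Rpower; apply exp_pos. }
  rewrite e2. apply pow_incr. split.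
  { apply Rmult_le_pos; apply pos_INR. }
  unfold Rpower. fold L.
  apply Rle_trans with ((y * L / 3) ^ 3).
  2: { apply exp_cube. nra. }
  assert (hNL : 27 * INR n <= y * L^3).
  { assert (27 * INR n / L ^ 3 < y) by lra.
    apply Rmult_lt_compat_r with (r := L^3) in H; [|apply pow_lt; lra].
    unfold Rdiv in H. rewrite Rmult_assoc Rinv_l in H; [lra|].
    apply pow_nonzero; lra. }
  rewrite -hyy.
  replace ((y * L / 3) ^ 3) with (y * y * (y * L^3) / 27) by (simpl; field).
  assert (0 <= y * y) by nra.
  nra.
Qed.

End Reals3.

Section Part1.
Local Open Scope ring_scope.

Lemma part1 n (F : fieldType) : card_M_eq1 n F 1.
Proof.
pose S := fun m : 'X_{1..n} => m <> 0%MM.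
pose M := fun p : {mpoly F[n]} => exists s : seq ({mpoly F[n]} * 'X_{1..n}),
  (forall x, List.In x s -> S x.2) /\ p = \sum_(x <- s) x.1 * 'X_[x.2].
have hg : generated_by_monomials S M by [].
have hgood : forall a, good S a <-> a <> 0%MM.
  move=> a; split.
    move=> [s [hs /mnm_lepP hle]] e; apply: hs; apply/mnmP => i; move: (hle i).
    by rewrite e !mnm0E leqn0 => /eqP.
  move=> ha; exists a; split => //; apply/mnm_lepP => i; exact: leqnn.
have hM : forall p, M p <-> p@_0%MM = 0.
  move=> p; rewrite (gen_mem hg); split.
    by move=> h; apply: h => /hgood /(_ erefl).
  move=> h0 a na; have -> // : a = 0%MM.
  by apply: NNPP => ne; apply: na; apply/hgood.
have inM : in_M 1 M.
  split; first by exists S.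
  exists (fun _ => 1); split.
    move=> c /hM; rewrite raddf_sum big_ord1 /= mcoeffZ mcoeff1 eqxx mulr1 => h i.
    by rewrite (ord1 i).
  move=> p; exists (fun _ => p@_0%MM); apply/hM.
  by rewrite mcoeffB raddf_sum big_ord1 /= mcoeffZ mcoeff1 eqxx mulr1 subrr.
exists M; split => // J [[S' hS'] hq].
have hm := gen_mono hS'.
have hstd : forall a, ~ J 'X_[a] <-> a = 0%MM.
  move=> a; split; last by move=> ->; apply: one_notin hm hq _.
  move=> na; apply: NNPP => ne.
  pose t (j : 'I_2) : 'X_{1..n} := if (j : nat) == 0%N then 0%MM else a.
  have : (2 <= 1)%N; last by [].
  apply: (indep_bound hm hq (t := t)).
    move=> [[|[|j1]] p1] [[|[|j2]] p2] //=; rewrite /t /= => e; try (by apply/val_inj);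
      exfalso; apply: ne; by rewrite e.
  move=> [[|[|j]] pj] //=; rewrite /t /=.
    exact: one_notin hm hq _.
move=> p; rewrite (proj1 hm p) hM; split.
  by move=> h; apply: h; apply/hstd.
by move=> h0 a /hstd ->.
Qed.

End Part1.

Lemma leq_expb a b e : a <= b -> a ^ e <= b ^ e.
Proof. by case: e => // e; rewrite leq_exp2r. Qed.

Lemma fact_le j : (j.+1)`! <= j.+1 ^ j.
Proof.
elim: j => // j IH; rewrite factS expnS leq_mul2l /=.
apply: leq_trans IH _; exact: leq_expb.
Qed.

Lemma num2 n K : 0 < n -> 1 < K ->
  K`! * n ^ K.-1 <= K ^ n * (K + n - 2) ^ ((n - 1) * (K - 1)) * (2 * K - 3) ^ (K - 2).
Proof.
case: K => [|[|B]] //; case: n => [|n'] // _ _.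
have e1 : (B.+2 + n'.+1 - 2 = B + n'.+1)%N by lia.
have e2 : (2 * B.+2 - 3 = (2 * B).+1)%N by lia.
have e3 : (B.+2 - 2 = B)%N by lia.
have e4 : (n'.+1 - 1 = n')%N by lia.
have e5 : (B.+2 - 1 = B.+1)%N by lia.
rewrite e1 e2 e3 e4 e5 /= factS.
have h1 : B.+1`! <= (2 * B).+1 ^ B.
  apply: leq_trans (fact_le B) _; apply: leq_expb; lia.
have h3 : n'.+1 ^ B.+1 <= (B + n'.+1) ^ (n' * B.+1).
  case: n' {e1 e4} => [|n'']; first by rewrite mul0n expn0 exp1n.
  apply: leq_trans (_ : (B + n''.+2) ^ B.+1 <= _).
    apply: leq_expb; exact: leq_addl.
  apply: leq_pexp2l; first by rewrite addnS.
  by rewrite leq_pmull.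
have h2 : B.+2 <= B.+2 ^ n'.+1 by rewrite -{1}(expn1 B.+2) leq_pexp2l.
apply: leq_trans (leq_mul (leq_mul h2 h1) h3) _.
by rewrite -!mulnA leq_mul2l [X in _ <= X]mulnC leqnn orbT.
Qed.

Lemma num3 n K : 0 < n -> K`! * n ^ K.-1 <= (n * K) ^ K.
Proof.
move=> n0; rewrite expnMn mulnC; apply: leq_mul.
  case: K => // K; exact: leq_pexp2l.
case: K => // j; apply: leq_trans (fact_le j) _; exact: leq_pexp2l.
Qed.

Lemma INR_expn a k : INR (a ^ k) = pow (INR a) k.
Proof.
elim: k => [|k IH] //=; rewrite expnS -IH.
have -> : (a * a ^ k)%N = Nat.mul a (a ^ k) by [].
by rewrite mult_INR.
Qed.

Theorem mainTheorem1 (n : nat) (hn : (1 <= n)%N) :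
  (forall F : fieldType, card_M_eq1 n F 1) /\
  (forall (F : fieldType) (K : nat), (2 <= K)%N ->
     card_M_le n F K
       (K ^ n * (K + n - 2) ^ ((n - 1) * (K - 1)) * (2 * K - 3) ^ (K - 2))%N) /\
  (forall r : R, Rlt (INR 1) r ->
     exists c : R, forall (F : fieldType) (K : nat), (1 <= K)%N ->
       card_M_leR n F K (Rmult c (Rpower r (Rpower (INR K) (Rdiv (INR 3) (INR 2)))))).
Proof.
split; first by move=> F; exact: part1.
split.
  move=> F K K2 m f hd.
  exact: leq_trans (core hn (ltnW K2) hd) (num2 hn K2).
move=> r hr; have [c hc] := real3 hn hr; exists c => F K K1 m f hd.
apply: Rle_trans (hc K K1).
have -> : Rmult (INR n) (INR K) = INR (n * K) by rewrite -mult_INR.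
rewrite -INR_expn; apply: le_INR; apply/leP.
exact: leq_trans (core hn K1 hd) (num3 _ hn).
Qed.
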